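(* For $r>1$ and integer $N\ge1$, $$\eta(r,2,N)=\frac{1}{\sum_{i=0}^N\left(\frac{r}{r-1}\right)^i}<\frac{1}{N+1},$$ and $\lim_{r\to\infty}\eta(r,2,N)=\frac{1}{N+1}$.
   Context: Single item auction with $N$ buyers whose values are i.i.d., each taking values $0<x^1<\dots<x^K$ with probabilities $p^i>0$, $\sum_ip^i=1$. Let $z^i=(\sum_{j=1}^ip^j)^N-(\sum_{j=1}^{i-1}p^j)^N$ and reserve index $t(x,p)=\max\{i: i\in\arg\max_{1\le k\le K}x^k\sum_{j=k}^Kp^j\}$. The efficiency loss ratio of the welfare-maximizing revenue-optimal auction is $\mathrm{ELR}_N(x,p)=\sum_{i=1}^{t(x,p)-1}z^ix^i/\sum_{i=1}^Kz^ix^i$. $\eta(r,K,N)$ is the supremum of $\mathrm{ELR}_N(x,p)$ over all such $p$ and all $x$ with $0<x^1<\dots<x^K\le rx^1$. *)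

(* Defs.v *)
From HB Require Import structures.
From mathcomp Require Import all_boot all_order all_algebra.
From mathcomp Require Import all_classical all_reals all_analysis.
Set Implicit Arguments. Unset Strict Implicit. Unset Printing Implicit Defensive.
Import Order.TTheory GRing.Theory Num.Theory.
Local Open Scope classical_set_scope.
Local Open Scope ring_scope.

(* Values are indexed 0-based by 'I_K: x i, p i stand for x^{i+1}, p^{i+1}. *)
Section Auction.
Variable R : realType.

Definition zprob (K N : nat) (p : 'I_K -> R) (i : 'I_K) : R :=
  (\sum_(j < K | (j <= i)%N) p j) ^+ N - (\sum_(j < K | (j < i)%N) p j) ^+ N.

Definition revenue (K : nat) (x p : 'I_K -> R) (k : 'I_K) : R :=
  x k * \sum_(j < K | (k <= j)%N) p j.

(* 0-based reserve index: largest maximizer of revenue (t(x,p) - 1 in 1-based) *)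
Definition reserve0 (K : nat) (x p : 'I_K -> R) : nat :=
  \max_(i < K | [forall k : 'I_K, revenue x p k <= revenue x p i]) (i : nat).

Definition ELR (K N : nat) (x p : 'I_K -> R) : R :=
  (\sum_(i < K | (i < reserve0 x p)%N) zprob N p i * x i)
  / (\sum_(i < K) zprob N p i * x i).

Definition admissible (r : R) (K : nat) (x p : 'I_K -> R) : Prop :=
  (forall i, 0 < p i) /\ \sum_(i < K) p i = 1 /\
  (forall i : 'I_K, 0 < x i) /\
  (forall i j : 'I_K, (i < j)%N -> x i < x j) /\
  (forall i j : 'I_K, (j : nat) = 0%N -> x i <= r * x j).

Definition eta_ELR (r : R) (K N : nat) : R :=
  sup [set e | exists x p : 'I_K -> R, admissible r x p /\ e = ELR N x p].

End Auction.

(* Main.v *)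
Require Import Defs.
From HB Require Import structures.
From mathcomp Require Import all_boot all_order all_algebra.
From mathcomp Require Import all_classical all_reals all_analysis.
From mathcomp Require Import zify ring lra.
Import Order.TTheory GRing.Theory Num.Theory.
Local Open Scope classical_set_scope.
Local Open Scope ring_scope.
Section H.
Variable R : realType.

Lemma sum_I2 (F : 'I_2 -> R) (P : pred 'I_2) :
  \sum_(i < 2 | P i) F i =
  (if P ord0 then F ord0 else 0) + (if P ord_max then F ord_max else 0).
Proof.
rewrite big_mkcond !big_ord_recl big_ord0 /= addr0.
by have -> : lift ord0 (ord0 : 'I_1) = ord_max :> 'I_2 by apply/val_inj.
Qed.

Lemma I2_cases (i : 'I_2) : i = ord0 \/ i = ord_max.
Proof.
case: i => [[|[|m]] Hm].
- by left; apply/val_inj.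
- by right; apply/val_inj.
- by [].
Qed.

Lemma reserve_cases (x p : 'I_2 -> R) :
  reserve0 x p = 0%N \/
  (reserve0 x p = 1%N /\ revenue x p ord0 <= revenue x p ord_max).
Proof.
rewrite /reserve0.
case: (boolP [forall k : 'I_2, revenue x p k <= revenue x p ord_max]) => H.
- right; split; last by move/forallP: H => /(_ ord0).
  apply/anti_leq/andP; split.
    by apply/bigmax_leqP => i _; rewrite -ltnS ltn_ord.
  exact: (@leq_bigmax_cond _ (fun i : 'I_2 => [forall k : 'I_2, revenue x p k <= revenue x p i]) (fun i : 'I_2 => (i:nat)) ord_max H).
- left; apply/eqP; rewrite -leqn0; apply/bigmax_leqP => i Hi.
  case: (I2_cases i) => Ei; subst i => //.
  by rewrite Hi in H.
Qed.

Lemma reserve_one (x p : 'I_2 -> R) :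
  (forall k, revenue x p k <= revenue x p ord_max) -> reserve0 x p = 1%N.
Proof.
move=> H; rewrite /reserve0.
have HP : [forall k : 'I_2, revenue x p k <= revenue x p ord_max].
  by apply/forallP.
apply/anti_leq/andP; split.
  by apply/bigmax_leqP => i _; rewrite -ltnS ltn_ord.
exact: (@leq_bigmax_cond _ (fun i : 'I_2 => [forall k : 'I_2, revenue x p k <= revenue x p i]) (fun i : 'I_2 => (i:nat)) ord_max HP).
Qed.

Lemma revenue0 (x p : 'I_2 -> R) : revenue x p ord0 = x ord0 * (p ord0 + p ord_max).
Proof. by rewrite /revenue sum_I2. Qed.
Lemma revenue1 (x p : 'I_2 -> R) : revenue x p ord_max = x ord_max * p ord_max.
Proof. by rewrite /revenue sum_I2 /= add0r. Qed.

Lemma ELR0 N (x p : 'I_2 -> R) : reserve0 x p = 0%N -> ELR N x p = 0.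
Proof. by move=> H; rewrite /ELR H sum_I2 /= addr0 mul0r. Qed.

Lemma ELR1 N (x p : 'I_2 -> R) : (1 <= N)%N -> reserve0 x p = 1%N ->
  p ord0 + p ord_max = 1 ->
  ELR N x p = (p ord0 ^+ N * x ord0) /
     (p ord0 ^+ N * x ord0 + (1 - p ord0 ^+ N) * x ord_max).
Proof.
move=> HN H Hs; rewrite /ELR H !sum_I2 /= /zprob !sum_I2 /= Hs.
by rewrite !addr0 expr0n; case: N HN => // n _ /=; rewrite subr0 expr1n.
Qed.

Lemma one_sub (q : R) N : 1 - q ^+ N = (1 - q) * \sum_(i < N) q ^+ (N.-1 - i).
Proof.
have := subrXX q 1 N; rewrite expr1n.
under eq_bigr do rewrite expr1n mulr1.
by move=> H; rewrite -opprB H -mulNr opprB.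
Qed.

Lemma key_eq (q s : R) N : q ^+ N * \sum_(i < N) s ^+ i.+1 =
  \sum_(i < N) q ^+ (N.-1 - i) * (q * s) ^+ i.+1.
Proof.
rewrite mulr_sumr; apply: eq_bigr => i _.
rewrite exprMn mulrA -exprD; congr (_ ^+ _ * _).
by case: i => i /= Hi; lia.
Qed.

Lemma key_le (q s : R) N : 0 <= q -> 0 <= s -> q * s <= 1 ->
  q ^+ N * \sum_(i < N) s ^+ i.+1 <= \sum_(i < N) q ^+ (N.-1 - i).
Proof.
move=> q0 s0 qs; rewrite key_eq; apply: ler_sum => i _.
rewrite -[leRHS]mulr1; apply: ler_wpM2l; first exact: exprn_ge0.
by apply: exprn_ile1 => //; apply: mulr_ge0.
Qed.

Lemma key_eq1 (q s : R) N : q * s = 1 ->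
  q ^+ N * \sum_(i < N) s ^+ i.+1 = \sum_(i < N) q ^+ (N.-1 - i).
Proof.
move=> qs; rewrite key_eq qs; apply: eq_bigr => i _; by rewrite expr1n mulr1.
Qed.

Lemma S_split (s : R) N : \sum_(i < N.+1) s ^+ i = 1 + \sum_(i < N) s ^+ i.+1.
Proof. by rewrite big_ord_recl expr0. Qed.

Lemma main_ineq (r x0 x1 p0 p1 : R) N : 1 < r -> 0 < x0 -> 0 < x1 ->
  x1 <= r * x0 -> 0 < p0 -> 0 < p1 -> p0 + p1 = 1 -> x0 <= x1 * p1 ->
  (p0 ^+ N * x0) / (p0 ^+ N * x0 + (1 - p0 ^+ N) * x1)
    <= 1 / \sum_(i < N.+1) (r / (r - 1)) ^+ i.
Proof.
move=> r1 x00 x10 x1r p00 p10 ps hx.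
set s := r / (r - 1).
have r10 : 0 < r - 1 by rewrite subr_gt0.
have s0 : 0 < s by rewrite /s divr_gt0 // (lt_trans ltr01 r1).
have rp1 : 1 <= r * p1.
  rewrite -(ler_pM2l x00) mulr1; apply: (le_trans hx).
  by rewrite mulrA [x0 * r]mulrC; apply: ler_wpM2r => //; apply: ltW.
have qs : p0 * s <= 1.
  rewrite /s mulrA ler_pdivrMr // mul1r.
  have -> : p0 = 1 - p1 by rewrite -ps addrK.
  lra.
set T := \sum_(i < N) p0 ^+ (N.-1 - i).
have T0 : 0 <= T by apply: sumr_ge0 => i _; apply: exprn_ge0; apply: ltW.
have B := key_le p0 s N (ltW p00) (ltW s0) qs.
have HS : 0 < \sum_(i < N.+1) s ^+ i.
  rewrite S_split; apply: (lt_le_trans ltr01); rewrite lerDl.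
  by apply: sumr_ge0 => i _; apply: exprn_ge0; apply: ltW.
have Ha : 0 < p0 ^+ N * x0 by apply: mulr_gt0 => //; apply: exprn_gt0.
have Hb : 0 <= (1 - p0 ^+ N) * x1.
  rewrite one_sub; apply: mulr_ge0; last exact: ltW.
  by apply: mulr_ge0 => //; lra.
rewrite ler_pdivrMr; last by apply: (lt_le_trans Ha); rewrite lerDl.
rewrite div1r [(\sum_(i < N.+1) s ^+ i)^-1 * _]mulrC ler_pdivlMr // S_split mulrDr mulr1 lerD2l.
rewrite one_sub -/T.
have -> : p0 ^+ N * x0 * \sum_(i < N) s ^+ i.+1 = x0 * (p0 ^+ N * \sum_(i < N) s ^+ i.+1) by ring.
apply: (le_trans (y := x0 * T)); first by apply: ler_wpM2l => //; apply: ltW.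
have -> : (1 - p0) * T * x1 = (x1 * p1) * T.
  have -> : 1 - p0 = p1 by lra.
  ring.
by apply: ler_wpM2r.
Qed.

Lemma main_eq (x0 x1 q s : R) N : 0 < x0 -> 0 < q -> q * s = 1 -> 0 < s ->
  x0 = x1 * (1 - q) ->
  (q ^+ N * x0) / (q ^+ N * x0 + (1 - q ^+ N) * x1)
    = 1 / \sum_(i < N.+1) s ^+ i.
Proof.
move=> x00 q0 qs s0 hx.
have HS : 0 < \sum_(i < N.+1) s ^+ i.
  rewrite S_split; apply: (lt_le_trans ltr01); rewrite lerDl.
  by apply: sumr_ge0 => i _; apply: exprn_ge0; apply: ltW.
have E : q ^+ N * x0 * \sum_(i < N.+1) s ^+ i = q ^+ N * x0 + (1 - q ^+ N) * x1.
  rewrite S_split mulrDr mulr1; congr (_ + _).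
  rewrite one_sub -(key_eq1 q s N qs) hx; ring.
have Ha : 0 < q ^+ N * x0 by apply: mulr_gt0 => //; apply: exprn_gt0.
rewrite -E; field.
by rewrite !gt_eqF // exprn_gt0.
Qed.

Lemma sup_max (E : set R) b : E b -> ubound E b -> sup E = b.
Proof.
move=> Eb ub; apply/le_anti/andP; split.
  by apply: ge_sup => //; exists b.
by apply: (ub_le_sup (E:=E)) => //; exists b.
Qed.

Lemma S_pos (s : R) N : 0 < s -> 0 < \sum_(i < N.+1) s ^+ i.
Proof.
move=> s0; rewrite S_split; apply: (lt_le_trans ltr01); rewrite lerDl.
by apply: sumr_ge0 => i _; apply: exprn_ge0; apply: ltW.
Qed.

Lemma eta_val N (r : R) : (1 <= N)%N -> 1 < r ->
  eta_ELR r 2 N = 1 / \sum_(i < N.+1) (r / (r - 1)) ^+ i.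
Proof.
move=> HN r1.
have r0 : 0 < r by apply: lt_trans r1.
have r10 : 0 < r - 1 by rewrite subr_gt0.
have s0 : 0 < r / (r - 1) by rewrite divr_gt0.
have HS := S_pos _ N s0.
have ri1 : r^-1 < 1 by rewrite invf_lt1.
have ri0 : 0 < r^-1 by rewrite invr_gt0.
rewrite /eta_ELR; apply: sup_max.
- pose x := fun i : 'I_2 => if (i : nat) == 0%N then 1 else r.
  pose p := fun i : 'I_2 => if (i : nat) == 0%N then 1 - r^-1 else r^-1.
  exists x, p; split.
    split; first by move=> i; case: (I2_cases i) => ->; rewrite /p /=; rewrite ?subr_gt0.
    split; first by rewrite sum_I2 /p /= subrK.
    split; first by move=> i; case: (I2_cases i) => ->; rewrite /x /=.
    split.
      by move=> i j; case: (I2_cases i) => ->; case: (I2_cases j) => -> //=; rewrite /x /=.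
    move=> i j Hj; have -> : j = ord0 by apply/val_inj.
    case: (I2_cases i) => ->; rewrite /x /= mulr1 //.
    exact: ltW.
  have Hres : reserve0 x p = 1%N.
    apply: reserve_one => k; case: (I2_cases k) => -> //.
    by rewrite revenue0 revenue1 /x /p /= subrK mul1r mulfV // gt_eqF.
  rewrite (ELR1 _ _ _ HN Hres); last by rewrite /p /= subrK.
  rewrite /x /p /=; apply: esym; apply: main_eq => //.
  + by rewrite subr_gt0.
  + by field; rewrite gt_eqF // gt_eqF.
  + by rewrite opprB addrC subrK mulfV // gt_eqF.
- move=> e [x [p [[Hp [Hs [Hx [Hinc Hr]]]] ->]]].
  case: (reserve_cases x p) => [H0 | [H1 Hrev]].
    by rewrite ELR0 // divr_ge0 // ltW.
  have ps : p ord0 + p ord_max = 1 by rewrite -Hs sum_I2.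
  rewrite (ELR1 _ _ _ HN H1 ps); apply: (@main_ineq r _ _ _ (p ord_max)) => //.
  + by apply: Hr.
  + by move: Hrev; rewrite revenue0 revenue1 ps mulr1.
Qed.

Lemma S_gt (s : R) N : (1 <= N)%N -> 1 < s -> N.+1%:R < \sum_(i < N.+1) s ^+ i.
Proof.
move=> HN s1; rewrite S_split -addn1 natrD addrC ltrD2l.
apply: (@lt_le_trans _ _ (\sum_(i < N) s)).
  by rewrite sumr_const card_ord -[s *+ N]mulr_natl -[X in X < _]mulr1 ltr_pM2l // ltr0n.
apply: ler_sum => i _; rewrite -[X in X <= _]expr1; apply: ler_eXn2l => //.
Qed.

Lemma cvg_pow (T : Type) (F : set_system T) (FF : Filter F) (f : T -> R^o) (n:nat) :
  f @ F --> (1:R^o) -> (fun x => f x ^+ n) @ F --> (1:R^o).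
Proof.
move=> Hf; elim: n => [|k IH].
  have -> : (fun x => f x ^+ 0) = (fun _ => 1 : R^o) by apply: funext => x; rewrite expr0.
  exact: cvg_cst.
have -> : (fun x => f x ^+ k.+1) = (f \* (fun x => f x ^+ k)) by apply: funext => x; rewrite exprS.
by rewrite -[X in _ --> X]mulr1; apply: cvgM.
Qed.

Lemma cvg_pow_sum (T : Type) (F : set_system T) (FF : Filter F) (f : T -> R^o) (n:nat) :
  f @ F --> (1:R^o) -> (fun x => \sum_(i < n) f x ^+ i) @ F --> (n%:R:R^o).
Proof.
move=> Hf; elim: n => [|n IH].
  have -> : (fun x => \sum_(i < 0) f x ^+ i) = (fun _ => 0 : R^o) by apply: funext => x; rewrite big_ord0.
  exact: cvg_cst.
have -> : (fun x => \sum_(i < n.+1) f x ^+ i) = (fun x => \sum_(i < n) f x ^+ i) + (fun x => f x ^+ n).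
  by apply: funext => x; rewrite big_ord_recr.
by rewrite -addn1 natrD; apply: cvgD => //; apply: cvg_pow.
Qed.
End H.

Theorem corollary1 (R : realType) (N : nat) (HN : (1 <= N)%N) :
  (forall r : R, 1 < r ->
     eta_ELR r 2 N = 1 / (\sum_(i < N.+1) (r / (r - 1)) ^+ i) /\
     eta_ELR r 2 N < 1 / (N.+1)%:R) /\
  eta_ELR r 2 N @[r --> +oo%R] --> ((N.+1)%:R^-1 : R^o).
Proof.
split.
  move=> r r1; have E := @eta_val R N r HN r1; split => //.
  have r10 : 0 < r - 1 by rewrite subr_gt0.
  have s1 : 1 < r / (r - 1) by rewrite ltr_pdivlMr // mul1r ltrBlDr ltrDl.
  have s0 : 0 < r / (r - 1) := lt_trans ltr01 s1.
  rewrite E !div1r ltf_pV2 ?posrE ?ltr0n ?S_pos //.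
  exact: S_gt.
have H2 : (fun r : R => ((\sum_(i < N.+1) (1 + (r - 1)^-1) ^+ i)^-1 : R^o)) @ +oo%R --> ((N.+1)%:R^-1 : R^o).
  apply: cvgV; first by rewrite pnatr_eq0.
  apply: cvg_pow_sum.
  rewrite -[X in _ --> X]addr0; apply: cvgD; first exact: cvg_cst.
  apply/(@gtr0_cvgV0 _ _ _ _ (fun r : R => r - 1)).
    apply: (filterS _ (nbhs_pinfty_gt (num_real (1:R)))) => r r1 /=.
    by rewrite subr_gt0.
  exact: cvg_addrr.
apply: (cvg_trans _ H2).
apply: near_eq_cvg.
apply: (filterS _ (nbhs_pinfty_gt (num_real (1:R)))) => r r1 /=.
rewrite (@eta_val R N r HN r1) div1r; congr (_^-1); apply: eq_bigr => i _.
congr (_ ^+ _); have r10 : r - 1 != 0 by rewrite subr_eq0 gt_eqF.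
by field.
Qed.
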